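(* Let $M>0$, $\beta^*>0$, and let $g$ be the log-normal density $g(t)=\frac{1}{t\sigma\sqrt{2\pi}}\exp\!\big(-\frac{(\ln t-\mu)^2}{2\sigma^2}\big)$ for $t>0$, $g(t)=0$ for $t\le0$ ($\mu\in\mathbb{R}$, $\sigma>0$). Let $I$ be the unique $C^1$ solution on $[0,\infty)$ of \[ I'(t)=\beta^*(M-I(t))\Big(I(t)-\int_0^t g(t-s)I(s)\,ds\Big),\qquad I(0)=I_0\in[0,M], \] and set $I_a(t)=I(t)-\int_0^t g(t-s)I(s)\,ds$. If $0<I_0\le M$, then $I_a(t)>0$ for all $t\ge0$; if $I_0=0$, then $I_a\equiv0$.
   Context: $I_a$ represents the number of actively infected individuals. *)

(* Defs.v *)
From Stdlib Require Import Reals.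
From Coquelicot Require Import Coquelicot.
Open Scope R_scope.

Definition lognormal (mu sigma : R) (t : R) : R :=
  if Rle_dec t 0 then 0
  else / (t * sigma * sqrt (2 * PI)) * exp (- (ln t - mu) ^ 2 / (2 * sigma ^ 2)).

Definition conv (g I : R -> R) (t : R) : R :=
  RInt (fun s => g (t - s) * I s) 0 t.

Definition Ia (g I : R -> R) (t : R) : R := I t - conv g I t.

(* f is C^1 on [0, +oo) with derivative f' there: two-sided derivative at
   every t > 0, right derivative at 0, and f' continuous on [0, +oo)
   (right-continuous at 0). Values of f on (-oo,0) are irrelevant. *)
Definition C1_on_nonneg_with_deriv (f f' : R -> R) : Prop :=
  (forall t, 0 < t -> is_derive f t (f' t)) /\
  filterlim (fun h => (f h - f 0) / h) (at_right 0) (locally (f' 0)) /\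
  (forall t, 0 < t -> continuous f' t) /\
  filterlim f' (at_right 0) (locally (f' 0)).

(* Main.v *)
Require Import Defs.
From Stdlib Require Import Reals Lra Lia Psatz Classical.
From Coquelicot Require Import Coquelicot.
Open Scope R_scope.

Lemma exp_le_mono x y : x <= y -> exp x <= exp y.
Proof. intros [H|H]; [left; now apply exp_increasing| subst; lra]. Qed.

Definition lnC (mu sigma : R) := exp (sigma ^ 2 / 2 - mu) / (sigma * sqrt (2 * PI)).

Lemma sqrt2PI_pos : 0 < sqrt (2 * PI).
Proof. apply sqrt_lt_R0. pose proof PI_RGT_0; lra. Qed.

Lemma lognormal_pos_eq mu sigma y : 0 < sigma -> 0 < y ->
  lognormal mu sigma y =
  exp (sigma ^ 2 / 2 - mu - (ln y - mu + sigma ^ 2) ^ 2 / (2 * sigma ^ 2))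
   / (sigma * sqrt (2 * PI)).
Proof.
  intros Hs Hy. unfold lognormal. destruct (Rle_dec y 0) as [H|H]; [lra|].
  pose proof sqrt2PI_pos.
  replace (sigma ^ 2 / 2 - mu - (ln y - mu + sigma ^ 2) ^ 2 / (2 * sigma ^ 2))
    with (- ln y + (- (ln y - mu) ^ 2 / (2 * sigma ^ 2))) by (field; lra).
  rewrite exp_plus, exp_Ropp, exp_ln by lra.
  field. repeat split; lra.
Qed.

Lemma lognormal_ge0 mu sigma t : 0 < sigma -> 0 <= lognormal mu sigma t.
Proof.
  intros Hs. destruct (Rle_dec t 0) as [Ht|Ht].
  - unfold lognormal. destruct (Rle_dec t 0); lra.
  - rewrite lognormal_pos_eq by lra. pose proof sqrt2PI_pos.
    apply Rmult_le_pos; [left; apply exp_pos|].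
    left; apply Rinv_0_lt_compat; nra.
Qed.

Lemma lognormal_le mu sigma t : 0 < sigma -> lognormal mu sigma t <= lnC mu sigma.
Proof.
  intros Hs. pose proof sqrt2PI_pos as Hsq.
  assert (0 < lnC mu sigma).
  { unfold lnC. apply Rdiv_lt_0_compat; [apply exp_pos| nra]. }
  destruct (Rle_dec t 0) as [Ht|Ht].
  - unfold lognormal. destruct (Rle_dec t 0); lra.
  - rewrite lognormal_pos_eq by lra. unfold lnC.
    apply Rmult_le_compat_r; [left; apply Rinv_0_lt_compat; nra|].
    apply exp_le_mono.
    assert (0 <= (ln t - mu + sigma ^ 2) ^ 2 / (2 * sigma ^ 2)).
    { apply Rdiv_le_0_compat; [apply pow2_ge_0| pose proof (pow_lt sigma 2 Hs); lra]. }
    lra.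
Qed.

Lemma lognormal_small mu sigma eps : 0 < sigma -> 0 < eps ->
  exists d, 0 < d /\ forall y, 0 < y < d -> lognormal mu sigma y < eps.
Proof.
  intros Hs He. pose proof sqrt2PI_pos.
  set (C := lnC mu sigma).
  assert (HC : 0 < C).
  { unfold C, lnC. apply Rdiv_lt_0_compat; [apply exp_pos| nra]. }
  set (A := 2 * sigma ^ 2 * C / eps + 1).
  assert (HA : 1 <= A).
  { unfold A. assert (0 <= 2 * sigma ^ 2 * C / eps); [|lra].
    apply Rdiv_le_0_compat; [|lra]. pose proof (pow_lt sigma 2 Hs). nra. }
  exists (exp (mu - sigma ^ 2 - A)). split; [apply exp_pos|].
  intros y [Hy1 Hy2].
  assert (Hl : ln y < mu - sigma ^ 2 - A).
  { rewrite <- (ln_exp (mu - sigma ^ 2 - A)). apply ln_increasing; lra. }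
  rewrite lognormal_pos_eq by lra.
  set (w := (ln y - mu + sigma ^ 2) ^ 2 / (2 * sigma ^ 2)).
  assert (Hw : C / eps < w).
  { unfold w. apply Rmult_lt_reg_r with (2 * sigma ^ 2); [nra|].
    unfold Rdiv at 2. rewrite Rmult_assoc, Rinv_l, Rmult_1_r by nra.
    assert (A * A <= (ln y - mu + sigma ^ 2) ^ 2) by nra.
    assert (C / eps * (2 * sigma ^ 2) = A - 1) by (unfold A; field; lra).
    nra. }
  replace (sigma ^ 2 / 2 - mu - w) with ((sigma ^ 2 / 2 - mu) + - w) by ring.
  rewrite exp_plus, exp_Ropp.
  fold (Rdiv (exp (sigma ^ 2 / 2 - mu)) (exp w)).
  pose proof (exp_pos w).
  replace (exp (sigma ^ 2 / 2 - mu) / exp w / (sigma * sqrt (2 * PI)))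
    with (C / exp w) by (unfold C, lnC; field; repeat split; lra).
  pose proof (exp_ineq1_le w). pose proof (exp_pos w).
  apply Rmult_lt_reg_r with (exp w); [lra|].
  unfold Rdiv. rewrite Rmult_assoc, Rinv_l, Rmult_1_r by lra.
  assert (C < eps * w).
  { apply Rmult_lt_reg_r with (/ eps); [apply Rinv_0_lt_compat; lra|].
    replace (eps * w * / eps) with w by (field; lra). exact Hw. }
  nra.
Qed.

Lemma lognormal_cont mu sigma t : 0 < sigma -> continuous (lognormal mu sigma) t.
Proof.
  intros Hs. pose proof sqrt2PI_pos as Hsq.
  destruct (Rtotal_order t 0) as [Ht|[Ht|Ht]].
  - apply continuous_ext_loc with (fun _ => 0); [|apply continuous_const].
    apply locally_interval with m_infty 0; simpl; auto.
    intros y _ Hy. unfold lognormal. destruct (Rle_dec y 0); lra.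
  - subst t. apply continuity_pt_filterlim.
    intros eps He.
    destruct (lognormal_small mu sigma eps Hs He) as [d [Hd Hsm]].
    exists d. split; auto. intros x [[_ Hx] Hdx]. simpl in *. unfold R_dist in *.
    assert (H0 : lognormal mu sigma 0 = 0).
    { unfold lognormal. destruct (Rle_dec 0 0); lra. }
    rewrite H0, Rminus_0_r.
    destruct (Rle_dec x 0) as [Hx0|Hx0].
    + unfold lognormal. destruct (Rle_dec x 0); [|lra]. rewrite Rabs_R0. lra.
    + rewrite Rminus_0_r in Hdx. rewrite Rabs_right in Hdx by lra.
      rewrite Rabs_right by (apply Rle_ge, lognormal_ge0; lra).
      apply Hsm; lra.
  - apply continuous_ext_loc with
      (fun s => / (s * sigma * sqrt (2 * PI)) * exp (- (ln s - mu) ^ 2 / (2 * sigma ^ 2))).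
    + apply locally_interval with 0 p_infty; simpl; auto.
      intros y Hy _. unfold lognormal. destruct (Rle_dec y 0); [lra|]. reflexivity.
    + apply (ex_derive_continuous (K := R_AbsRing) (V := R_NormedModule)). auto_derive. repeat split; try lra.
      apply Rgt_not_eq. apply Rmult_gt_0_compat; [|lra]. nra.
Qed.

Definition gs (w : R) := exp (- (w * w)).
Definition Pg (x : R) := RInt gs 0 x.
Definition fu (u t : R) := exp (- (u * u * (1 + t * t))) / (1 + t * t).
Definition Bf (x : R) := RInt (fun t => fu x t) 0 1.

Lemma gs_cont w : continuous gs w.
Proof.
  apply (ex_derive_continuous (K := R_AbsRing) (V := R_NormedModule)).
  unfold gs. auto_derive. auto.
Qed.

Lemma gs_ex a b : ex_RInt gs a b.
Proof. apply (ex_RInt_continuous (V := R_CompleteNormedModule)). intros; apply gs_cont. Qed.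

Lemma derive_Pg x : is_derive Pg x (gs x).
Proof.
  apply is_derive_RInt with 0.
  - apply filter_forall. intros b. apply RInt_correct, gs_ex.
  - apply gs_cont.
Qed.

Lemma pos1tt t : 0 < 1 + t * t.
Proof. nra. Qed.

Lemma fu_cont_t x t : continuous (fun t => fu x t) t.
Proof.
  apply (ex_derive_continuous (K := R_AbsRing) (V := R_NormedModule)).
  unfold fu. auto_derive. pose proof (pos1tt t). lra.
Qed.

Lemma fu_ex x a b : ex_RInt (fun t => fu x t) a b.
Proof. apply (ex_RInt_continuous (V := R_CompleteNormedModule)). intros; apply fu_cont_t. Qed.

Lemma Derive_fu u v : Derive (fun z => fu z v) u = -2 * u * exp (- (u * u * (1 + v * v))).
Proof.
  apply is_derive_unique. unfold fu. pose proof (pos1tt v).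
  auto_derive; [lra|]. field. lra.
Qed.

Lemma derive_Bf x : is_derive Bf x (-2 * gs x * Pg x).
Proof.
  unfold Bf.
  assert (H : is_derive (fun x0 => RInt (fun t => fu x0 t) 0 1) x
            (RInt (fun t => Derive (fun u => fu u t) x) 0 1)).
  { apply is_derive_RInt_param.
    - apply filter_forall. intros x0 t _. unfold fu. auto_derive.
      pose proof (pos1tt t); lra.
    - intros t _.
      apply continuity_2d_pt_ext with
        (fun u v => (-2 * u) * exp (- (u * u * (1 + v * v)))).
      { intros; rewrite Derive_fu; ring. }
      apply (continuity_2d_pt_mult (fun u v => -2 * u) (fun u v => exp (- (u * u * (1 + v * v))))).
      + apply (continuity_2d_pt_mult (fun u v => -2) (fun u v => u)).
        apply continuity_2d_pt_const. apply continuity_2d_pt_id1.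
      + apply (continuity_1d_2d_pt_comp exp (fun u v => - (u * u * (1 + v * v)))).
        * apply continuity_pt_filterlim. apply continuous_exp.
        * apply continuity_2d_pt_opp.
          apply (continuity_2d_pt_mult (fun u v => u * u) (fun u v => 1 + v * v)).
          -- apply (continuity_2d_pt_mult (fun u v => u) (fun u v => u));
               apply continuity_2d_pt_id1.
          -- apply (continuity_2d_pt_plus (fun u v => 1) (fun u v => v * v)).
             apply continuity_2d_pt_const.
             apply (continuity_2d_pt_mult (fun u v => v) (fun u v => v));
               apply continuity_2d_pt_id2.
    - apply filter_forall. intros y. apply fu_ex. }
  replace (-2 * gs x * Pg x) with (RInt (fun t => Derive (fun u => fu u t) x) 0 1); [exact H|].
  rewrite (RInt_ext _ (fun t => scal (-2 * gs x) (scal x (gs (x * t + 0))))).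
  2:{ intros t _. rewrite Derive_fu. unfold gs, scal; simpl. unfold mult; simpl.
      replace (- (x * x * (1 + t * t))) with (- (x * x) + - ((x * t + 0) * (x * t + 0))) by ring.
      rewrite exp_plus. ring. }
  rewrite (RInt_scal (V := R_CompleteNormedModule)).
  2:{ apply (ex_RInt_continuous (V := R_CompleteNormedModule)). intros z _.
      apply (ex_derive_continuous (K := R_AbsRing) (V := R_NormedModule)).
      unfold gs, scal; simpl; unfold mult; simpl. auto_derive. auto. }
  rewrite (RInt_comp_lin (V := R_CompleteNormedModule)) by (apply gs_ex).
  unfold Pg, scal; simpl; unfold mult; simpl.
  change (-2 * gs x * RInt gs (x * 0 + 0) (x * 1 + 0) = -2 * gs x * RInt gs 0 x).
  f_equal. f_equal; ring.
Qed.

Definition Fg x := Pg x * Pg x + Bf x.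

Lemma derive_Fg x : is_derive Fg x 0.
Proof.
  unfold Fg.
  replace 0 with (gs x * Pg x + Pg x * gs x + -2 * gs x * Pg x) by ring.
  apply (is_derive_plus (K := R_AbsRing) (V := R_NormedModule)).
  - apply (is_derive_mult Pg Pg). apply derive_Pg. apply derive_Pg.
    intros; apply Rmult_comm.
  - apply derive_Bf.
Qed.

Lemma Fg_const x : Fg x = PI / 4.
Proof.
  assert (Fg x = Fg 0).
  { destruct (MVT_gen Fg 0 x (fun _ => 0)) as [c [_ Hc]].
    - intros; apply derive_Fg.
    - intros; apply continuity_pt_filterlim.
      apply (ex_derive_continuous (K := R_AbsRing) (V := R_NormedModule)).
      eexists; apply derive_Fg.
    - lra. }
  rewrite H. unfold Fg, Pg, Bf. rewrite RInt_point. unfold zero; simpl.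
  rewrite Rmult_0_l, Rplus_0_l.
  rewrite <- atan_1.
  replace (atan 1) with (atan 1 - atan 0) by (rewrite atan_0; ring).
  apply is_RInt_unique.
  apply (is_RInt_ext (fun t => / (1 + t²))).
  { intros t _. unfold fu. change (@eq R (/ (1 + t * t)) (exp (- (0 * 0 * (1 + t * t))) / (1 + t * t))). replace (- (0 * 0 * (1 + t * t))) with 0 by ring. rewrite exp_0. unfold Rdiv. ring. }
  apply (is_RInt_derive atan (fun t => / (1 + t²))).
  - intros; apply is_derive_atan.
  - intros t _. apply (ex_derive_continuous (K := R_AbsRing) (V := R_NormedModule)).
    auto_derive. unfold Rsqr. pose proof (pos1tt t). lra.
Qed.

Lemma Bf_pos x : 0 < Bf x.
Proof.
  unfold Bf. apply RInt_gt_0; [lra| |].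
  - intros t _. unfold fu. apply Rdiv_lt_0_compat. apply exp_pos. apply pos1tt.
  - intros; apply fu_cont_t.
Qed.

Lemma Pg_bound x : Rabs (Pg x) < sqrt PI / 2.
Proof.
  pose proof (Fg_const x) as H. unfold Fg in H. pose proof (Bf_pos x).
  pose proof PI_RGT_0.
  assert (Hs : sqrt PI * sqrt PI = PI) by (apply sqrt_sqrt; lra).
  assert (0 < sqrt PI) by (apply sqrt_lt_R0; lra).
  apply Rsqr_incrst_0.
  - rewrite <- Rsqr_abs. unfold Rsqr. nra.
  - apply Rabs_pos.
  - lra.
Qed.

Lemma lognormal_ex mu sigma a b : 0 < sigma -> ex_RInt (lognormal mu sigma) a b.
Proof.
  intros Hs. apply (ex_RInt_continuous (V := R_CompleteNormedModule)).
  intros; apply lognormal_cont; auto.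
Qed.

Lemma Rint_gs_ab a b : RInt gs a b = Pg b - Pg a.
Proof.
  rewrite <- (RInt_Chasles (V := R_CompleteNormedModule) gs a 0 b) by apply gs_ex.
  rewrite <- (opp_RInt_swap (V := R_CompleteNormedModule)) by apply gs_ex.
  unfold Pg, plus, opp; simpl. ring.
Qed.

Lemma lognormal_subst mu sigma a b : 0 < sigma ->
  RInt (lognormal mu sigma) (exp (mu + sigma * sqrt 2 * a)) (exp (mu + sigma * sqrt 2 * b))
  = (Pg b - Pg a) / sqrt PI.
Proof.
  intros Hs.
  pose proof PI_RGT_0.
  assert (Hs2 : 0 < sqrt 2) by (apply sqrt_lt_R0; lra).
  assert (HsP : 0 < sqrt PI) by (apply sqrt_lt_R0; lra).
  assert (H2 : sqrt 2 * sqrt 2 = 2) by (apply sqrt_sqrt; lra).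
  assert (H2P : sqrt (2 * PI) = sqrt 2 * sqrt PI) by (apply sqrt_mult; lra).
  rewrite <- (RInt_comp (V := R_CompleteNormedModule) (lognormal mu sigma)
     (fun w => exp (mu + sigma * sqrt 2 * w))
     (fun w => sigma * sqrt 2 * exp (mu + sigma * sqrt 2 * w))).
  - rewrite (RInt_ext (V := R_CompleteNormedModule) _ (fun y => scal (/ sqrt PI) (gs y))).
    + rewrite (RInt_scal (V := R_CompleteNormedModule)) by apply gs_ex.
      rewrite Rint_gs_ab. unfold scal; simpl; unfold mult; simpl. unfold Rdiv. ring.
    + intros y _. unfold scal; simpl; unfold mult; simpl.
      rewrite lognormal_pos_eq by (auto; apply exp_pos).
      rewrite ln_exp.
      replace (sigma ^ 2 / 2 - mu - (mu + sigma * sqrt 2 * y - mu + sigma ^ 2) ^ 2 / (2 * sigma ^ 2))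
        with ((- (y * y)) + (- (mu + sigma * sqrt 2 * y))).
      2:{ replace ((mu + sigma * sqrt 2 * y - mu + sigma ^ 2) ^ 2)
            with ((sigma * y) ^ 2 * (sqrt 2 * sqrt 2) + 2 * sigma ^ 3 * sqrt 2 * y + sigma ^ 4) by ring.
          rewrite H2. field. lra. }
      rewrite (exp_plus (- (y * y))), (exp_Ropp (mu + sigma * sqrt 2 * y)). unfold gs. rewrite H2P.
      pose proof (exp_pos (mu + sigma * sqrt 2 * y)).
      field. repeat split; lra.
  - intros; apply lognormal_cont; auto.
  - intros x _. split.
    + auto_derive; auto. ring.
    + apply (ex_derive_continuous (K := R_AbsRing) (V := R_NormedModule)).
      auto_derive. auto.
Qed.

Lemma G_lt1 mu sigma t : 0 < sigma -> 0 <= t -> RInt (lognormal mu sigma) 0 t < 1.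
Proof.
  intros Hs Ht.
  destruct (Req_dec t 0) as [->|Ht0].
  { rewrite RInt_point. unfold zero; simpl. lra. }
  pose proof PI_RGT_0.
  assert (Hs2 : 0 < sqrt 2) by (apply sqrt_lt_R0; lra).
  assert (HsP : 0 < sqrt PI) by (apply sqrt_lt_R0; lra).
  assert (HPP : sqrt PI * sqrt PI = PI) by (apply sqrt_sqrt; lra).
  set (b := (ln t - mu) / (sigma * sqrt 2)).
  set (eta := / 2 - Pg b / sqrt PI).
  assert (Heta : 0 < eta).
  { unfold eta. pose proof (Pg_bound b). pose proof (Rle_abs (Pg b)).
    assert (Pg b / sqrt PI < / 2); [|lra].
    apply Rmult_lt_reg_r with (sqrt PI); auto. unfold Rdiv.
    rewrite Rmult_assoc, Rinv_l, Rmult_1_r by lra. lra. }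
  set (C := lnC mu sigma).
  assert (HC : 0 < C).
  { unfold C, lnC. apply Rdiv_lt_0_compat; [apply exp_pos|]. pose proof sqrt2PI_pos. nra. }
  set (e := Rmin (t / 2) (eta / (2 * C))).
  assert (He : 0 < e).
  { unfold e. apply Rmin_pos; [lra|]. apply Rdiv_lt_0_compat; lra. }
  assert (He1 : e < t) by (unfold e; pose proof (Rmin_l (t/2) (eta / (2 * C))); lra).
  assert (He2 : C * e <= eta / 2).
  { unfold e. pose proof (Rmin_r (t/2) (eta / (2 * C))).
    replace (eta / 2) with (C * (eta / (2 * C))) by (field; lra).
    apply Rmult_le_compat_l; lra. }
  set (a := (ln e - mu) / (sigma * sqrt 2)).
  assert (Ea : exp (mu + sigma * sqrt 2 * a) = e).
  { unfold a. replace (mu + sigma * sqrt 2 * ((ln e - mu) / (sigma * sqrt 2))) with (ln e)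
      by (field; lra). apply exp_ln; lra. }
  assert (Eb : exp (mu + sigma * sqrt 2 * b) = t).
  { unfold b. replace (mu + sigma * sqrt 2 * ((ln t - mu) / (sigma * sqrt 2))) with (ln t)
      by (field; lra). apply exp_ln; lra. }
  rewrite <- (RInt_Chasles (V := R_CompleteNormedModule) _ 0 e t) by (apply lognormal_ex; auto).
  unfold plus; simpl.
  rewrite <- Ea at 2. rewrite <- Eb. rewrite lognormal_subst by auto.
  assert (H1 : RInt (lognormal mu sigma) 0 e <= C * e).
  { apply Rle_trans with (RInt (fun _ => C) 0 e).
    - apply RInt_le; [lra| apply lognormal_ex; auto| |].
      + apply (ex_RInt_continuous (V := R_CompleteNormedModule)). intros; apply continuous_const.
      + intros; apply lognormal_le; auto.
    - rewrite RInt_const. unfold scal; simpl; unfold mult; simpl. lra. }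
  assert (H2 : (Pg b - Pg a) / sqrt PI < 1 - eta).
  { pose proof (Pg_bound a). pose proof (Rle_abs (- Pg a)). rewrite Rabs_Ropp in *.
    unfold eta. apply Rmult_lt_reg_r with (sqrt PI); auto.
    replace ((Pg b - Pg a) / sqrt PI * sqrt PI) with (Pg b - Pg a) by (field; lra).
    replace ((1 - (/ 2 - Pg b / sqrt PI)) * sqrt PI) with (sqrt PI / 2 + Pg b) by (field; lra).
    lra. }
  lra.
Qed.

Lemma ball_R (x e y : R) : ball x e y <-> Rabs (y - x) < e.
Proof. reflexivity. Qed.

Lemma locally_R (x : R) (P : R -> Prop) :
  locally x P <-> exists d, 0 < d /\ forall y, Rabs (y - x) < d -> P y.
Proof.
  split.
  - intros [d Hd]. exists d. split; [apply cond_pos|]. intros y Hy. apply Hd. exact Hy.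
  - intros [d [Hd H]]. exists (mkposreal d Hd). intros y Hy. apply H. exact Hy.
Qed.

Lemma at_right_R (x : R) (P : R -> Prop) :
  at_right x P <-> exists d, 0 < d /\ forall y, x < y < x + d -> P y.
Proof.
  unfold at_right, within. rewrite locally_R. split.
  - intros [d [Hd H]]. exists d. split; auto. intros y Hy. apply H; [|lra].
    rewrite Rabs_right; lra.
  - intros [d [Hd H]]. exists d. split; auto. intros y Hy Hxy. apply H.
    rewrite Rabs_right in Hy; lra.
Qed.

Lemma cont_pos (f : R -> R) x : continuous f x -> 0 < f x ->
  exists d, 0 < d /\ forall y, Rabs (y - x) < d -> 0 < f y.
Proof.
  intros Hc Hp. apply locally_R.
  pose proof (proj1 (filterlim_locally f (f x)) Hc (mkposreal _ Hp)) as H.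
  simpl in H. eapply filter_imp; [|exact H]. intros y Hy.
  rewrite ball_R in Hy. apply Rabs_def2 in Hy. lra.
Qed.


Lemma first_zero (f : R -> R) t1 : 0 < f 0 -> f t1 <= 0 -> 0 <= t1 ->
  at_right 0 (fun s => 0 < f s) ->
  (forall t, 0 < t <= t1 -> continuous f t) ->
  exists ts, 0 < ts <= t1 /\ f ts = 0 /\ forall s, 0 <= s < ts -> 0 < f s.
Proof.
  intros H0 H1 Ht1 Hr Hc.
  assert (Ht1p : t1 <> 0) by (intros ->; lra).
  set (E := fun t => 0 <= t <= t1 /\ forall s, 0 <= s <= t -> 0 < f s).
  assert (HE0 : E 0).
  { split; [lra|]. intros s Hs. replace s with 0 by lra. auto. }
  assert (Hb : bound E).
  { exists t1. intros t [Ht _]. lra. }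
  destruct (completeness E Hb (ex_intro _ 0 HE0)) as [ts [Hub Hlub]].
  assert (Hts0 : 0 <= ts) by (apply Hub; auto).
  assert (Hts1 : ts <= t1).
  { apply Hlub. intros t [Ht _]. lra. }
  assert (HA : forall s, 0 <= s < ts -> 0 < f s).
  { intros s Hs. apply NNPP. intros Hn.
    assert (ts <= s); [|lra].
    apply Hlub. intros t [Ht Hf].
    destruct (Rle_or_lt t s) as [Hle|Hlt]; auto.
    exfalso. apply Hn. apply Hf. lra. }
  assert (HB : f ts <= 0).
  { destruct (Rle_or_lt (f ts) 0) as [Hle|Hgt]; auto. exfalso.
    destruct (Req_dec ts 0) as [Hz|Hz].
    - subst ts. apply at_right_R in Hr. destruct Hr as [d [Hd Hr]].
      set (t' := Rmin (d / 2) t1).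
      assert (Ht' : 0 < t') by (unfold t'; apply Rmin_pos; lra).
      assert (E t').
      { split; [unfold t' in *; pose proof (Rmin_r (d/2) t1); split; lra|].
        intros s Hs. destruct (Req_dec s 0) as [->|Hs0]; auto.
        apply Hr. unfold t' in Hs. pose proof (Rmin_l (d/2) t1). lra. }
      pose proof (Hub t' H). lra.
    - assert (Hlt : ts < t1).
      { destruct (Req_dec ts t1) as [->|]; [lra|lra]. }
      destruct (cont_pos f ts (Hc ts ltac:(lra)) Hgt) as [d [Hd Hf]].
      set (t' := Rmin (ts + d / 2) t1).
      assert (E t').
      { split; [unfold t' in *; pose proof (Rmin_r (ts + d/2) t1); split; [apply Rmin_glb; lra|lra]|].
        intros s Hs. destruct (Rlt_or_le s ts) as [Hs'|Hs']; [apply HA; split; lra|].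
        apply Hf. unfold t' in Hs. pose proof (Rmin_l (ts + d/2) t1).
        rewrite Rabs_right; lra. }
      pose proof (Hub t' H).
      assert (ts < t').
      { unfold t'. apply Rmin_glb_lt; lra. }
      lra. }
  assert (Htsp : 0 < ts).
  { destruct (Req_dec ts 0) as [->|]; [lra|lra]. }
  exists ts. split; [split; lra|]. split; auto.
  destruct (Req_dec (f ts) 0) as [|Hne]; auto. exfalso.
  assert (Hneg : 0 < - f ts) by lra.
  assert (Hc' : continuous (fun y => - f y) ts).
  { apply (continuous_opp (K := R_AbsRing) (V := R_NormedModule)). apply Hc; lra. }
  destruct (cont_pos (fun y => - f y) ts Hc' Hneg) as [d [Hd Hf]].
  set (y := Rmax 0 (ts - d / 2)).
  assert (Hy : 0 <= y < ts).
  { unfold y. split; [apply Rmax_l|]. apply Rmax_lub_lt; lra. }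
  pose proof (HA y Hy).
  assert (0 < - f y); [|lra].
  apply Hf. unfold y in *. pose proof (Rmax_r 0 (ts - d/2)).
  rewrite Rabs_left1; [|lra]. lra.
Qed.

Lemma zero_lemma (f df : R -> R) :
  (forall x, continuous f x) -> (forall x, 0 < x -> is_derive f x (df x)) -> f 0 = 0 ->
  (forall T, 0 < T -> exists L, 0 <= L /\ forall t m, 0 <= t <= T ->
      (forall s, 0 <= s <= t -> Rabs (f s) <= m) -> Rabs (df t) <= L * m) ->
  forall t, 0 <= t -> f t = 0.
Proof.
  intros Hc Hd H0 HL t Ht.
  destruct (HL (t + 1)) as [L [HL0 HLb]]; [lra|].
  set (d := / (2 * (L + 1))).
  assert (Hdp : 0 < d) by (unfold d; apply Rinv_0_lt_compat; lra).
  assert (HLd : L * d <= / 2).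
  { unfold d. apply Rmult_le_reg_r with (2 * (L + 1)); [lra|].
    rewrite Rmult_assoc, Rinv_l by lra. lra. }
  assert (Hind : forall n s, 0 <= s <= Rmin (INR n * d) (t + 1) -> f s = 0).
  { induction n as [|n IH].
    - intros s Hs. simpl in Hs. rewrite Rmult_0_l in Hs.
      rewrite Rmin_left in Hs by lra. replace s with 0 by lra. exact H0.
    - set (t0 := Rmin (INR n * d) (t + 1)) in *.
      set (t1 := Rmin (INR (S n) * d) (t + 1)).
      assert (Hn0 : 0 <= INR n) by apply pos_INR.
      assert (Ht01 : 0 <= t0 <= t1 /\ t1 <= t + 1 /\ t1 - t0 <= d).
      { unfold t0, t1. rewrite S_INR, Rmult_plus_distr_r, Rmult_1_l.
        assert (0 <= INR n * d) by nra.
        unfold Rmin. destruct (Rle_dec (INR n * d) (t + 1));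
          destruct (Rle_dec (INR n * d + d) (t + 1)); repeat split; lra. }
      destruct Ht01 as [[Ht0 Ht01] [Ht1 Ht1d]].
      assert (Hcabs : forall c, continuity_pt (fun s => Rabs (f s)) c).
      { intros c. apply continuity_pt_filterlim. apply continuous_Rabs_comp. apply Hc. }
      destruct (continuity_ab_maj (fun s => Rabs (f s)) 0 t1 ltac:(lra)
                  (fun c _ => Hcabs c)) as [p [Hp Hpr]].
      set (m := Rabs (f p)) in *.
      assert (Hm0 : 0 <= m) by apply Rabs_pos.
      assert (Hm : m <= 0).
      { destruct (Rle_or_lt p t0) as [Hpt|Hpt].
        - unfold m. rewrite (IH p) by lra. rewrite Rabs_R0. lra.
        - destruct (MVT_gen f t0 p df) as [c [Hcr Hmvt]].
          + intros x Hx. rewrite Rmin_left, Rmax_right in Hx by lra. apply Hd. lra.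
          + intros x _. apply continuity_pt_filterlim. apply Hc.
          + rewrite Rmin_left, Rmax_right in Hcr by lra.
            rewrite (IH t0) in Hmvt by lra.
            assert (Hdc : Rabs (df c) <= L * m).
            { apply HLb; [lra|]. intros s Hs. apply Hp. lra. }
            assert (m = Rabs (df c) * (p - t0)).
            { unfold m. rewrite Rminus_0_r in Hmvt. rewrite Hmvt, Rabs_mult.
              rewrite (Rabs_right (p - t0)) by lra. reflexivity. }
            assert (Rabs (df c) * (p - t0) <= L * m * d).
            { apply Rmult_le_compat; try lra. apply Rabs_pos. }
            nra. }
      intros s Hs. fold t1 in Hs.
      assert (Rabs (f s) <= 0) by (apply Rle_trans with m; [apply Hp; lra| lra]).
      pose proof (Rabs_pos (f s)).
      destruct (Req_dec (f s) 0) as [|Hne]; auto.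
      pose proof (Rabs_pos_lt _ Hne). lra. }
  destruct (INR_archimed d (t + 1) Hdp) as [n Hn].
  apply (Hind n). rewrite Rmin_right by lra. lra.
Qed.

Lemma J_facts (I D : R -> R) :
  (forall t, 0 < t -> is_derive I t (D t)) ->
  filterlim (fun h => (I h - I 0) / h) (at_right 0) (locally (D 0)) ->
  (forall x, continuous (fun s => I (Rmax 0 s)) x) /\
  (forall x, 0 < x -> is_derive (fun s => I (Rmax 0 s)) x (D x)).
Proof.
  intros Hd Hd0.
  assert (Hder : forall x, 0 < x -> is_derive (fun s => I (Rmax 0 s)) x (D x)).
  { intros x Hx. apply is_derive_ext_loc with I; [|apply Hd; auto].
    apply locally_interval with 0 p_infty; simpl; auto.
    intros y Hy _. rewrite Rmax_right by lra. reflexivity. }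
  split; auto.
  intros x. destruct (Rtotal_order x 0) as [Hx|[Hx|Hx]].
  - apply continuous_ext_loc with (fun _ => I 0); [|apply continuous_const].
    apply locally_interval with m_infty 0; simpl; auto.
    intros y _ Hy. rewrite Rmax_left by lra. reflexivity.
  - subst x. apply filterlim_locally. intros eps. apply locally_R.
    pose proof (proj1 (filterlim_locally _ (D 0)) Hd0 (mkposreal 1 Rlt_0_1)) as H.
    apply at_right_R in H. destruct H as [d [Hd' H]]. simpl in H.
    set (K := Rabs (D 0) + 1).
    assert (HK : 0 < K) by (unfold K; pose proof (Rabs_pos (D 0)); lra).
    assert (He : 0 < eps) by apply cond_pos.
    exists (Rmin d (eps / K)). split.
    { apply Rmin_pos; auto. apply Rdiv_lt_0_compat; auto. }
    intros y Hy. rewrite Rminus_0_r in Hy. apply ball_R.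
    rewrite (Rmax_left 0 0) by lra.
    destruct (Rle_or_lt y 0) as [Hy0|Hy0].
    + rewrite Rmax_left by lra. replace (I 0 - I 0) with 0 by ring. rewrite Rabs_R0. auto.
    + rewrite Rmax_right by lra. rewrite Rabs_right in Hy by lra.
      pose proof (Rmin_l d (eps / K)). pose proof (Rmin_r d (eps / K)).
      assert (Hyd : 0 < y < 0 + d) by (split; lra). specialize (H y Hyd). assert (H3 : Rabs ((I y - I 0) / y - D 0) < 1) by exact H.
      assert (Hq : Rabs ((I y - I 0) / y) < K).
      { unfold K. pose proof (Rabs_triang_inv ((I y - I 0) / y) (D 0)). lra. }
      replace (I y - I 0) with (y * ((I y - I 0) / y)) by (field; lra).
      rewrite Rabs_mult, (Rabs_right y) by lra.
      apply Rle_lt_trans with (y * K).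
      { apply Rmult_le_compat_l; lra. }
      apply Rlt_le_trans with (eps / K * K).
      { apply Rmult_lt_compat_r; lra. }
      unfold Rdiv. rewrite Rmult_assoc, Rinv_l, Rmult_1_r by lra. lra.
  - apply (ex_derive_continuous (K := R_AbsRing) (V := R_NormedModule)).
    eexists. apply Hder. lra.
Qed.

Lemma cont_shift mu sigma t : 0 < sigma -> forall s, continuous (fun s => lognormal mu sigma (t - s)) s.
Proof.
  intros Hs s.
  apply (continuous_comp (fun s => t - s) (lognormal mu sigma)).
  - apply (ex_derive_continuous (K := R_AbsRing) (V := R_NormedModule)). auto_derive. auto.
  - apply lognormal_cont; auto.
Qed.

Lemma conv_ex mu sigma (I : R -> R) t : 0 < sigma ->
  (forall x, continuous (fun s => I (Rmax 0 s)) x) -> 0 <= t ->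
  ex_RInt (fun s => lognormal mu sigma (t - s) * I s) 0 t.
Proof.
  intros Hs Hc Ht.
  apply (ex_RInt_ext (fun s => lognormal mu sigma (t - s) * I (Rmax 0 s))).
  { intros x Hx. rewrite Rmin_left, Rmax_right in Hx by lra.
    rewrite (Rmax_right 0 x) by lra. reflexivity. }
  apply (ex_RInt_continuous (V := R_CompleteNormedModule)). intros z _.
  apply (continuous_mult (K := R_AbsRing) (fun s => lognormal mu sigma (t - s)) (fun s => I (Rmax 0 s))).
  - apply cont_shift; auto.
  - apply Hc.
Qed.

Lemma conv_bound mu sigma (I : R -> R) t m : 0 < sigma ->
  (forall x, continuous (fun s => I (Rmax 0 s)) x) -> 0 <= t ->
  (forall s, 0 <= s <= t -> Rabs (I s) <= m) ->
  Rabs (conv (lognormal mu sigma) I t) <= lnC mu sigma * m * t.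
Proof.
  intros Hs Hc Ht Hm.
  assert (Hm0 : 0 <= m) by (apply Rle_trans with (Rabs (I 0)); [apply Rabs_pos| apply Hm; lra]).
  set (C := lnC mu sigma).
  assert (Hb : forall s, 0 < s < t -> - (C * m) <= lognormal mu sigma (t - s) * I s <= C * m).
  { intros s Hs'. pose proof (lognormal_ge0 mu sigma (t - s) Hs).
    pose proof (lognormal_le mu sigma (t - s) Hs). fold C in H0.
    pose proof (Hm s ltac:(lra)). apply Rabs_le_between in H1.
    split; nra. }
  assert (Hex := conv_ex mu sigma I t Hs Hc Ht).
  assert (Hexc : forall c : R, ex_RInt (V := R_NormedModule) (fun _ : R => c) 0 t).
  { intros c. apply (ex_RInt_continuous (V := R_CompleteNormedModule)). intros; apply continuous_const. }
  apply Rabs_le. unfold conv. split.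
  - apply Rle_trans with (RInt (fun _ => - (C * m)) 0 t).
    + rewrite RInt_const. unfold scal; simpl; unfold mult; simpl. fold C. nra.
    + apply RInt_le; auto. intros; apply Hb; auto.
  - apply Rle_trans with (RInt (fun _ => C * m) 0 t).
    + apply RInt_le; auto. intros; apply Hb; auto.
    + rewrite RInt_const. unfold scal; simpl; unfold mult; simpl. fold C. nra.
Qed.

Lemma RInt_shift mu sigma t c : 0 < sigma ->
  RInt (fun s => lognormal mu sigma (t - s) * c) 0 t = c * RInt (lognormal mu sigma) 0 t.
Proof.
  intros Hs.
  rewrite (RInt_ext (V := R_CompleteNormedModule) _
     (fun y => scal (- c) (scal (-1) (lognormal mu sigma (-1 * y + t))))).
  2:{ intros x _. unfold scal; simpl; unfold mult; simpl.
      replace (-1 * x + t) with (t - x) by ring. ring. }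
  rewrite (RInt_scal (V := R_CompleteNormedModule)).
  2:{ apply (ex_RInt_continuous (V := R_CompleteNormedModule)). intros z _.
      apply (continuous_scal_r (K := R_AbsRing) (V := R_NormedModule) (-1)
        (fun y => lognormal mu sigma (-1 * y + t))).
      apply (continuous_comp (fun s => -1 * s + t) (lognormal mu sigma)).
      - apply (ex_derive_continuous (K := R_AbsRing) (V := R_NormedModule)). auto_derive. auto.
      - apply lognormal_cont; auto. }
  rewrite (RInt_comp_lin (V := R_CompleteNormedModule)) by (apply lognormal_ex; auto).
  replace (-1 * 0 + t) with t by ring. replace (-1 * t + t) with 0 by ring.
  rewrite <- (opp_RInt_swap (V := R_CompleteNormedModule)) by (apply lognormal_ex; auto).
  unfold scal, opp; simpl; unfold mult; simpl. ring.
Qed.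

Lemma Ia_pos_lemma mu sigma (I : R -> R) t : 0 < sigma ->
  (forall x, continuous (fun s => I (Rmax 0 s)) x) -> 0 <= t ->
  0 < I t -> (forall s, 0 <= s <= t -> I s <= I t) ->
  0 < Ia (lognormal mu sigma) I t.
Proof.
  intros Hs Hc Ht HI Hle.
  assert (H : conv (lognormal mu sigma) I t <= I t * RInt (lognormal mu sigma) 0 t).
  { rewrite <- RInt_shift by auto. unfold conv.
    apply RInt_le; auto.
    - apply conv_ex; auto.
    - apply (ex_RInt_continuous (V := R_CompleteNormedModule)). intros z _.
      apply (continuous_mult (K := R_AbsRing) (fun s => lognormal mu sigma (t - s)) (fun _ => I t)).
      apply cont_shift; auto. apply continuous_const.
    - intros s Hs'. apply Rmult_le_compat_l; [apply lognormal_ge0; auto|]. apply Hle; lra. }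
  pose proof (G_lt1 mu sigma t Hs Ht).
  unfold Ia. nra.
Qed.

Lemma deriv_Mminus (J : R -> R) M x d : is_derive J x d -> is_derive (fun s => M - J s) x (- d).
Proof.
  intros H.
  pose proof (is_derive_minus (K := R_AbsRing) (V := R_NormedModule) (fun _ => M) J x 0 d
     (is_derive_const M x) H) as H'.
  replace (- d) with (minus 0 d) by (unfold minus, plus, opp; simpl; ring).
  exact H'.
Qed.

Lemma cont_Mminus (J : R -> R) M x : continuous J x -> continuous (fun s => M - J s) x.
Proof.
  intros H. apply (continuous_minus (V := R_NormedModule) (fun _ => M) J).
  apply continuous_const. exact H.
Qed.

Theorem proposition3p6 (M beta mu sigma I0 : R) (I : R -> R) :
  0 < M -> 0 < beta -> 0 < sigma ->
  0 <= I0 <= M ->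
  I 0 = I0 ->
  C1_on_nonneg_with_deriv I
    (fun t => beta * (M - I t) * Ia (lognormal mu sigma) I t) ->
  (0 < I0 <= M -> forall t, 0 <= t -> 0 < Ia (lognormal mu sigma) I t) /\
  (I0 = 0 -> forall t, 0 <= t -> Ia (lognormal mu sigma) I t = 0).
Proof.
  intros HM Hb Hs HI0 HI0e HC1.
  set (D := fun t => beta * (M - I t) * Ia (lognormal mu sigma) I t) in *.
  destruct HC1 as [Hder [Hder0 [Hcont Hcont0]]].
  destruct (J_facts I D Hder Hder0) as [HJc HJd].
  set (J := fun s => I (Rmax 0 s)) in *.
  assert (HJI : forall s, 0 <= s -> J s = I s).
  { intros s Hs0. unfold J. rewrite Rmax_right by lra. reflexivity. }
  set (C := lnC mu sigma).
  assert (HC : 0 < C).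
  { unfold C, lnC. apply Rdiv_lt_0_compat; [apply exp_pos|]. pose proof sqrt2PI_pos. nra. }
  assert (Hbd : forall T, 0 <= T -> exists B, 0 <= B /\ forall s, 0 <= s <= T -> Rabs (I s) <= B).
  { intros T HT.
    assert (Hcabs : forall c, continuity_pt (fun s => Rabs (J s)) c).
    { intros c. apply continuity_pt_filterlim. apply continuous_Rabs_comp. apply HJc. }
    destruct (continuity_ab_maj (fun s => Rabs (J s)) 0 T HT (fun c _ => Hcabs c)) as [p [Hp Hpr]].
    exists (Rabs (J p)). split; [apply Rabs_pos|].
    intros s Hs'. rewrite <- HJI by lra. apply Hp; auto. }
  assert (HIa : forall T B t, 0 <= t <= T -> 0 <= B -> (forall s, 0 <= s <= T -> Rabs (I s) <= B) ->
            Rabs (Ia (lognormal mu sigma) I t) <= B + C * B * T).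
  { intros T B t Ht HB0 HB. unfold Ia.
    pose proof (conv_bound mu sigma I t B Hs HJc ltac:(lra) ltac:(intros; apply HB; lra)).
    fold C in H.
    pose proof (Rabs_triang (I t) (- conv (lognormal mu sigma) I t)). rewrite Rabs_Ropp in H0.
    pose proof (HB t Ht).
    assert (C * B * t <= C * B * T) by (apply Rmult_le_compat_l; [nra|lra]).
    unfold Rminus. lra. }
  split.
  -
    intros [HI0p HI0M].
    destruct (Req_dec I0 M) as [HeqM|HltM].
    + assert (HIM : forall t, 0 <= t -> M - J t = 0).
      { apply (zero_lemma (fun s => M - J s) (fun s => - D s)).
        - intros x; apply cont_Mminus, HJc.
        - intros x Hx. apply deriv_Mminus, HJd; auto.
        - unfold J. rewrite Rmax_left by lra. lra.
        - intros T HT. destruct (Hbd T ltac:(lra)) as [B [HB0 HB]].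
          exists (beta * (B + C * B * T)). split.
          { apply Rmult_le_pos; [lra|]. assert (0 <= C * B * T) by (apply Rmult_le_pos; nra). lra. }
          intros t m Ht Hm.
          pose proof (HIa T B t Ht HB0 HB) as H1.
          assert (H2 : Rabs (M - I t) <= m) by (rewrite <- HJI by lra; apply Hm; lra).
          rewrite Rabs_Ropp. unfold D. rewrite !Rabs_mult, (Rabs_right beta) by lra.
          pose proof (Rabs_pos (M - I t)). pose proof (Rabs_pos (Ia (lognormal mu sigma) I t)).
          assert (Rabs (M - I t) * Rabs (Ia (lognormal mu sigma) I t) <= m * (B + C * B * T))
            by (apply Rmult_le_compat; lra).
          nra. }
      assert (HIM' : forall t, 0 <= t -> I t = M).
      { intros t Ht. rewrite <- HJI by lra. pose proof (HIM t Ht). lra. }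
      intros t Ht. apply Ia_pos_lemma; auto.
      * rewrite HIM'; lra.
      * intros s Hs'. rewrite !HIM'; lra.
    + assert (Hu : forall t, 0 <= t -> I t < M).
      { intros t1 Ht1. apply Rnot_le_lt. intros Hle.
        destruct (first_zero (fun s => M - J s) t1) as [ts [Hts [Hf0 Hfp]]].
        - unfold J. rewrite Rmax_left by lra. lra.
        - rewrite HJI; lra.
        - lra.
        - destruct (cont_pos (fun s => M - J s) 0 (cont_Mminus J M 0 (HJc 0)))
            as [d [Hd Hdd]].
          { unfold J. rewrite Rmax_left by lra. lra. }
          apply at_right_R. exists d. split; auto. intros y Hy. apply Hdd.
          rewrite Rminus_0_r, Rabs_right; lra.
        - intros; apply cont_Mminus, HJc.
        - destruct (Hbd ts ltac:(lra)) as [B [HB0 HB]].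
          set (K := B + C * B * ts).
          assert (HK : forall c, 0 <= c <= ts -> Rabs (Ia (lognormal mu sigma) I c) <= K).
          { intros c Hc. apply HIa; auto. }
          destruct (MVT_gen (fun s => (M - J s) * exp (beta * K * s)) 0 ts
            (fun c => (- D c) * exp (beta * K * c) + (M - J c) * (beta * K * exp (beta * K * c))))
            as [c [Hc Hmvt]].
          + intros x Hx. rewrite Rmin_left, Rmax_right in Hx by lra.
            apply (is_derive_mult (K := R_AbsRing) (fun s => M - J s) (fun s => exp (beta * K * s))).
            * apply deriv_Mminus, HJd; lra.
            * auto_derive; auto. ring.
            * intros; apply Rmult_comm.
          + intros x _. apply continuity_pt_filterlim.
            apply (continuous_mult (K := R_AbsRing) (fun s => M - J s) (fun s => exp (beta * K * s))).
            * apply cont_Mminus, HJc.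
            * apply (ex_derive_continuous (K := R_AbsRing) (V := R_NormedModule)). auto_derive. auto.
          + rewrite Rmin_left, Rmax_right in Hc by lra.
            simpl in Hmvt. rewrite Hf0, Rmult_0_l in Hmvt.
            rewrite (HJI 0) in Hmvt by lra. rewrite Rmult_0_r, exp_0, Rmult_1_r, HI0e in Hmvt.
            rewrite HJI in Hmvt by lra.
            assert (Huc : 0 <= M - I c).
            { destruct (Req_dec c ts) as [->|Hne].
              - rewrite <- HJI by lra. lra.
              - rewrite <- HJI by lra. left. apply Hfp. lra. }
            pose proof (HK c Hc) as HKc. apply Rabs_le_between in HKc.
            assert (Hdv : 0 <= - D c * exp (beta * K * c) + (M - I c) * (beta * K * exp (beta * K * c))).
            { unfold D. pose proof (exp_pos (beta * K * c)).
              replace (- (beta * (M - I c) * Ia (lognormal mu sigma) I c) * exp (beta * K * c) +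
                (M - I c) * (beta * K * exp (beta * K * c)))
                with (exp (beta * K * c) * beta * (M - I c) * (K - Ia (lognormal mu sigma) I c)) by ring.
              apply Rmult_le_pos; [|lra]. apply Rmult_le_pos; [|lra]. apply Rmult_le_pos; lra. }
            assert (0 <= (- D c * exp (beta * K * c) + (M - I c) * (beta * K * exp (beta * K * c))) * (ts - 0))
              by (apply Rmult_le_pos; lra).
            lra. }
      assert (HIa0 : Ia (lognormal mu sigma) I 0 = I0).
      { unfold Ia, conv. rewrite RInt_point. unfold zero; simpl. rewrite HI0e. ring. }
      intros t1 Ht1. apply Rnot_le_lt. intros Hle.
      destruct (first_zero (Ia (lognormal mu sigma) I) t1) as [ts [Hts [Hf0 Hfp]]].
      * lra.
      * exact Hle.
      * lra.
      * assert (HD0 : 0 < D 0).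
        { unfold D. rewrite HIa0, HI0e. apply Rmult_lt_0_compat; [|lra]. apply Rmult_lt_0_compat; lra. }
        pose proof (proj1 (filterlim_locally _ (D 0)) Hcont0 (mkposreal _ HD0)) as H.
        apply at_right_R in H. destruct H as [d [Hd H]].
        apply at_right_R. exists d. split; auto. intros y Hy.
        specialize (H y Hy). assert (H' : Rabs (D y - D 0) < D 0) by exact H.
        apply Rabs_def2 in H'.
        assert (HDy : 0 < D y) by lra. unfold D in HDy.
        pose proof (Hu y ltac:(lra)).
        destruct (Rle_or_lt (Ia (lognormal mu sigma) I y) 0) as [Hn|]; auto.
        assert (beta * (M - I y) * Ia (lognormal mu sigma) I y <= 0); [|lra].
        apply Rmult_le_0_l; [|lra]. apply Rmult_le_pos; lra.
      * intros t Ht.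
        apply continuous_ext_loc with (fun s => D s / (beta * (M - I s))).
        { apply locally_interval with 0 p_infty; simpl; [lra|auto|].
          intros y Hy _. pose proof (Hu y ltac:(lra)). unfold D. field. lra. }
        apply continuity_pt_filterlim.
        apply (continuity_pt_div D (fun s => beta * (M - I s))).
        -- apply continuity_pt_filterlim. apply Hcont. lra.
        -- apply continuity_pt_filterlim.
           apply (continuous_mult (K := R_AbsRing) (fun _ => beta) (fun s => M - I s)).
           apply continuous_const. apply cont_Mminus.
           apply (ex_derive_continuous (K := R_AbsRing) (V := R_NormedModule)).
           eexists. apply Hder. lra.
        -- pose proof (Hu t ltac:(lra)). apply Rgt_not_eq. apply Rmult_lt_0_compat; lra.
      * assert (Hmono : forall s, 0 <= s <= ts -> I s <= I ts).
        { intros s Hs'.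
          destruct (MVT_gen J s ts D) as [c [Hc Hmvt]].
          - intros x Hx. rewrite Rmin_left, Rmax_right in Hx by lra. apply HJd. lra.
          - intros x _. apply continuity_pt_filterlim. apply HJc.
          - rewrite Rmin_left, Rmax_right in Hc by lra.
            rewrite !HJI in Hmvt by lra.
            assert (0 <= D c).
            { unfold D. pose proof (Hu c ltac:(lra)).
              assert (0 <= Ia (lognormal mu sigma) I c).
              { destruct (Req_dec c ts) as [->|Hne]; [lra|]. left; apply Hfp; lra. }
              apply Rmult_le_pos; [|lra]. apply Rmult_le_pos; lra. }
            assert (0 <= D c * (ts - s)) by (apply Rmult_le_pos; lra).
            lra. }
        assert (0 < Ia (lognormal mu sigma) I ts); [|lra].
        apply Ia_pos_lemma; auto; try lra.
        pose proof (Hmono 0 ltac:(lra)). lra.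
  -
    intros HI00.
    assert (HI : forall t, 0 <= t -> J t = 0).
    { apply (zero_lemma J D HJc HJd).
      - unfold J. rewrite Rmax_left by lra. lra.
      - intros T HT. destruct (Hbd T ltac:(lra)) as [B [HB0 HB]].
        exists (beta * (M + B) * (1 + C * T)). split.
        { apply Rmult_le_pos; [|nra]. nra. }
        intros t m Ht Hm.
        assert (Hm' : forall s, 0 <= s <= t -> Rabs (I s) <= m).
        { intros s Hs'. rewrite <- HJI by lra. apply Hm; auto. }
        assert (Hm0 : 0 <= m) by (apply Rle_trans with (Rabs (J 0)); [apply Rabs_pos| apply Hm; lra]).
        pose proof (conv_bound mu sigma I t m Hs HJc ltac:(lra) Hm') as Hcv. fold C in Hcv.
        unfold D. rewrite !Rabs_mult. rewrite (Rabs_right beta) by lra.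
        assert (H1 : Rabs (M - I t) <= M + B).
        { pose proof (Rabs_triang M (- I t)). rewrite Rabs_Ropp, (Rabs_right M) in H by lra.
          pose proof (HB t ltac:(lra)). unfold Rminus. lra. }
        assert (H2 : Rabs (Ia (lognormal mu sigma) I t) <= m * (1 + C * T)).
        { unfold Ia. pose proof (Rabs_triang (I t) (- conv (lognormal mu sigma) I t)).
          rewrite Rabs_Ropp in H. pose proof (Hm' t ltac:(lra)).
          assert (C * m * t <= C * m * T) by (apply Rmult_le_compat_l; [nra|lra]).
          unfold Rminus. nra. }
        assert (0 <= Rabs (M - I t)) by apply Rabs_pos.
        assert (0 <= Rabs (Ia (lognormal mu sigma) I t)) by apply Rabs_pos.
        apply Rle_trans with (beta * (M + B) * (m * (1 + C * T))).
        + apply Rmult_le_compat; try nra.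
        + nra. }
    intros t Ht. unfold Ia, conv.
    rewrite <- HJI, HI by lra.
    rewrite (RInt_ext (V := R_CompleteNormedModule) _ (fun _ => 0)).
    + rewrite RInt_const. unfold scal; simpl; unfold mult; simpl. ring.
    + intros x Hx. rewrite Rmin_left, Rmax_right in Hx by lra.
      rewrite <- HJI, HI by lra. apply Rmult_0_r.
Qed.
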